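(* Let $\gamma_X=(X,d_X)$ and $\gamma_Y=(Y,d_Y)$ be two dynamic metric spaces and let $\delta>0$. Then for every $X'\subseteq X$ there exists $Y'\subseteq Y$ with $|Y'|\le|X'|$ and $d_{\mathrm{dyn}}(\gamma_{X'},\gamma_{Y'})\le d_{\mathrm{dyn}}(\gamma_X,\gamma_Y)+\delta$.
   Context: A dynamic metric space $\gamma_X=(X,d_X(\cdot))$ is a finite set $X$ with $d_X:\mathbb{R}\times X\times X\to\mathbb{R}_{\ge0}$ such that each $d_X(t)$ is a pseudometric and each $t\mapsto d_X(t)(x,x')$ is continuous; for $X'\subseteq X$, $\gamma_{X'}=(X',d_X|_{X'})$. A tripod between sets $X,Y$ is a set $Z$ with surjections $\varphi_X:Z\to X$, $\varphi_Y:Z\to Y$. It is a $(2,\varepsilon)$-tripod if for all $t\in\mathbb{R}$ and $z,z'\in Z$: $\min_{t'\in[t-\varepsilon,t+\varepsilon]}d_X(t')(\varphi_Xz,\varphi_Xz')\le d_Y(t)(\varphi_Yz,\varphi_Yz')+2\varepsilon$ and $\min_{t'\in[t-\varepsilon,t+\varepsilon]}d_Y(t')(\varphi_Yz,\varphi_Yz')\le d_X(t)(\varphi_Xz,\varphi_Xz')+2\varepsilon$. The distortion of a tripod is the infimum of $\varepsilon>0$ for which it is a $(2,\varepsilon)$-tripod, and $d_{\mathrm{dyn}}(\gamma_X,\gamma_Y)$ is the infimum of distortions over all tripods between $X$ and $Y$. *)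

(* Defs.v *)
From mathcomp Require Import all_boot.
From Stdlib Require Import Reals.
From Coquelicot Require Import Coquelicot.

Set Implicit Arguments.
Unset Strict Implicit.
Unset Printing Implicit Defensive.
Local Open Scope R_scope.

Definition is_pseudometric (T : Type) (d : T -> T -> R) : Prop :=
  (forall x y, (0 <= d x y)) /\
  (forall x, d x x = 0) /\
  (forall x y, d x y = d y x) /\
  (forall x y z, (d x z <= d x y + d y z)).

Definition is_DMS (X : finType) (d : R -> X -> X -> R) : Prop :=
  (forall t, is_pseudometric (d t)) /\
  (forall x x', continuity (fun t => d t x x')).

Definition restr_dist (X : finType) (d : R -> X -> X -> R) (X' : {set X})
  : R -> {x : X | x \in X'} -> {x : X | x \in X'} -> R :=
  fun t a b => d t (proj1_sig a) (proj1_sig b).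

Definition surjective (A B : Type) (f : A -> B) : Prop := forall b, exists a, f a = b.

(* (phiX, phiY) with phiX : Z -> X, phiY : Z -> Y is a (2,eps)-tripod.
   "min_{t' in [t-eps,t+eps]} d(t')(..) <= c" is written as the existence of
   such a t' (the min is attained by continuity). *)
Definition is_2eps_tripod (X Y Z : Type) (dX : R -> X -> X -> R) (dY : R -> Y -> Y -> R)
  (phiX : Z -> X) (phiY : Z -> Y) (eps : R) : Prop :=
  forall (t : R) (z z' : Z),
    (exists t', (t - eps <= t' <= t + eps) /\
       (dX t' (phiX z) (phiX z') <= dY t (phiY z) (phiY z') + 2 * eps)) /\
    (exists t', (t - eps <= t' <= t + eps) /\
       (dY t' (phiY z) (phiY z') <= dX t (phiX z) (phiX z') + 2 * eps)).

(* distortion: infimum of eps > 0 such that it is a (2,eps)-tripod (+oo if none) *)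
Definition distortion (X Y Z : Type) (dX : R -> X -> X -> R) (dY : R -> Y -> Y -> R)
  (phiX : Z -> X) (phiY : Z -> Y) : Rbar :=
  Rbar_glb (fun e : Rbar => exists eps : R,
              e = Finite eps /\ (0 < eps) /\ is_2eps_tripod dX dY phiX phiY eps).

Definition d_dyn (X Y : Type) (dX : R -> X -> X -> R) (dY : R -> Y -> Y -> R) : Rbar :=
  Rbar_glb (fun e : Rbar => exists (Z : Type) (phiX : Z -> X) (phiY : Z -> Y),
              surjective phiX /\ surjective phiY /\ e = distortion dX dY phiX phiY).

Arguments restr_dist [X] d X' _ _ _.

(* Main.v *)
Require Import Defs.
From mathcomp Require Import all_boot.
From Stdlib Require Import Reals Lra Classical ClassicalEpsilon.
From Coquelicot Require Import Coquelicot.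
Local Open Scope R_scope.

Lemma glb_correct (E : Rbar -> Prop) : Rbar_is_glb E (Rbar_glb E).
Proof. unfold Rbar_glb; exact (proj2_sig (Rbar_ex_glb E)). Qed.

Lemma glb_le (E : Rbar -> Prop) e : E e -> Rbar_le (Rbar_glb E) e.
Proof. intros H; exact (proj1 (glb_correct E) e H). Qed.

Lemma glb_lt (E : Rbar -> Prop) c :
  Rbar_lt (Rbar_glb E) c -> exists e, E e /\ Rbar_lt e c.
Proof.
  intros H. apply NNPP; intros Hn.
  assert (Hlb : Rbar_is_lower_bound E c).
  { intros x Hx. apply Rbar_not_lt_le. intros Hl. apply Hn. exists x; split; auto. }
  apply (Rbar_lt_not_le _ _ H). exact (proj2 (glb_correct E) c Hlb).
Qed.

Lemma dist_ge0 {X Y Z : Type} (dX : R -> X -> X -> R) (dY : R -> Y -> Y -> R)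
  (phiX : Z -> X) (phiY : Z -> Y) : Rbar_le (Finite 0) (distortion dX dY phiX phiY).
Proof.
  apply (proj2 (glb_correct _)). intros x [eps [-> [H _]]]. simpl; lra.
Qed.

Lemma ddyn_ge0 {X Y : Type} (dX : R -> X -> X -> R) (dY : R -> Y -> Y -> R) :
  Rbar_le (Finite 0) (d_dyn dX dY).
Proof.
  apply (proj2 (glb_correct _)). intros x [Z [pX [pY [_ [_ ->]]]]]. apply dist_ge0.
Qed.

Theorem mainTheorem12 (X Y : finType) (dX : R -> X -> X -> R) (dY : R -> Y -> Y -> R)
  (hX : is_DMS dX) (hY : is_DMS dY) (delta : R) (hdelta : 0 < delta) :
  forall X' : {set X}, exists Y' : {set Y},
    (#|Y'| <= #|X'|)%nat /\
    Rbar_le (d_dyn (restr_dist dX X') (restr_dist dY Y'))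
            (Rbar_plus (d_dyn dX dY) (Finite delta)).
Proof.
  intros X'.
  pose proof (ddyn_ge0 dX dY) as H0.
  destruct (d_dyn dX dY) as [D| |] eqn:HD.
  2: { exists set0. split; [by rewrite cards0 |]. simpl. case: (d_dyn _ _) => * /=; exact I. }
  2: { simpl in H0. contradiction. }
  assert (Hlt : Rbar_lt (d_dyn dX dY) (Finite (D + delta))) by (rewrite HD; simpl; lra).
  destruct (glb_lt _ _ Hlt) as [e [[Z [phiX [phiY [sX [sY ->]]]]] He]].
  destruct (glb_lt _ _ He) as [e' [[eps [-> [Heps Htri]]] Hle]].
  set g : X -> Z := fun x => proj1_sig (constructive_indefinite_description _ (sX x)).
  assert (Hg : forall x, phiX (g x) = x).
  { intros x. unfold g. exact (proj2_sig (constructive_indefinite_description _ (sX x))). }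
  exists [set phiY (g x) | x in X'].
  split; [apply leq_imset_card |].
  set Y' := [set phiY (g x) | x in X'].
  pose phiY' := fun z : {x : X | x \in X'} =>
    exist (fun y => y \in Y') (phiY (g (proj1_sig z))) (imset_f _ (proj2_sig z)).
  apply Rbar_le_trans with (distortion (restr_dist dX X') (restr_dist dY Y') (fun z : {x : X | x \in X'} => z) phiY').
  { apply glb_le. exists {x : X | x \in X'}, (fun z => z), phiY'. split; [|split; auto].
    - intros b; exists b; reflexivity.
    - intros [y hy]. destruct (imsetP hy) as [x hx ->].
      exists (exist _ x hx). apply val_inj. reflexivity. }
  apply Rbar_le_trans with (Finite eps).
  { apply glb_le. exists eps; split; [reflexivity|split; [exact Heps|]].
    intros t z z'. unfold restr_dist, phiY'; simpl.
    destruct (Htri t (g (proj1_sig z)) (g (proj1_sig z'))) as [H1 H2].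
    rewrite !Hg in H1 H2. split; assumption. }
  simpl. simpl in Hle. lra.
Qed.
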